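(* Let $(X,d)$ be a nonempty compact homogeneous metric space of diameter $D$, and let $m$ be a Borel probability measure on $X$ invariant under all isometries. Let $A=\int_{X\times X} d(x,y)\,d(m\times m)(x,y)$ and $\mu=1-(m\times m)(\Delta)$, where $\Delta$ is the diagonal of $X\times X$. If $A=\mu D$, then $X$ is finite, $d(x,y)=D$ for all $x\neq y$ in $X$ (i.e. $d$ is $D$ times the discrete metric), and $m$ is the uniform probability measure on $X$.
   Context: A metric space is homogeneous if its isometry group acts transitively on its points. *)

(* Defs.v *)
From HB Require Import structures.
From mathcomp Require Import all_boot all_order all_algebra.
From mathcomp Require Import all_classical all_reals all_analysis.
Set Implicit Arguments. Unset Strict Implicit. Unset Printing Implicit Defensive.
Import Order.TTheory GRing.Theory Num.Theory.
Local Open Scope classical_set_scope.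
Local Open Scope ring_scope.

Definition is_metric {R : realType} {T : Type} (dist : T -> T -> R) : Prop :=
  [/\ forall x y, 0 <= dist x y,
      forall x y, dist x y = 0 <-> x = y,
      forall x y, dist x y = dist y x &
      forall x y z, dist x z <= dist x y + dist y z].

Definition dopen {R : realType} {T : Type} (dist : T -> T -> R) (U : set T) : Prop :=
  forall x, U x -> exists2 e : R, 0 < e & [set y | dist x y < e] `<=` U.

Definition dcompact {R : realType} {T : Type} (dist : T -> T -> R) : Prop :=
  forall F : set (set T), (forall U, F U -> dopen dist U) ->
    (forall x, exists2 U, F U & U x) ->
    exists s : seq (set T), (forall U, U \in s -> F U) /\
                            (forall x, exists2 U, U \in s & U x).

Definition metric_isometry {R : realType} {T : Type} (dist : T -> T -> R) (f : T -> T) : Prop :=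
  bijective f /\ forall x y, dist (f x) (f y) = dist x y.

Definition homogeneous {R : realType} {T : Type} (dist : T -> T -> R) : Prop :=
  forall x y : T, exists2 f, metric_isometry dist f & f x = y.

Definition diam {R : realType} {T : Type} (dist : T -> T -> R) : R :=
  sup [set r | exists x y, r = dist x y].

Definition diagonal_set {T : Type} : set (T * T) := [set p | p.1 = p.2].

(* Main.v *)
Require Import Defs.
From HB Require Import structures.
From mathcomp Require Import all_boot all_order all_algebra.
From mathcomp Require Import all_classical all_reals all_analysis.
From mathcomp Require Import finmap ring lra.
Import Order.TTheory GRing.Theory Num.Theory.
Local Open Scope classical_set_scope.
Local Open Scope ring_scope.

Lemma my_le_int d' (U : measurableType d') (R : realType)
  (mu : {measure set U -> \bar R}) (f g : U -> \bar R) :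
  (forall x, 0 <= f x)%E -> (forall x, f x <= g x)%E ->
  (\int[mu]_x f x <= \int[mu]_x g x)%E.
Proof.
move=> f0 fg; have g0 x : (0 <= g x)%E by apply: le_trans (fg x).
rewrite !ge0_integralTE //; apply: ereal_sup_le =>  y [h hf <-]; exists h => //= x.
exact: le_trans (hf x) (fg x).
Qed.

Lemma int_scal_indic d' (U : measurableType d') (R : realType)
  (mu : {measure set U -> \bar R}) (c : R) (A : set U) :
  0 <= c -> measurable A -> (\int[mu]_x (c * \1_A x)%:E = c%:E * mu A)%E.
Proof.
move=> c0 mA; under eq_integral => x _ do rewrite EFinM.
rewrite ge0_integralZl_EFin //.
all: try by rewrite integral_indic // setIT.
all: try by move=> x _; rewrite lee_fin indicE.
apply: (measurable_realfun.measurable_EFinP setT (\1_A : U -> R)).2; exact: measurable_realfun.measurable_indic.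
Qed.

Section Aux.
Context {R : realType} {dsp : measure_display} {T : measurableType dsp}
  (dist : T -> T -> R).
Hypothesis hd : is_metric dist.
Hypothesis hmeas : (measurable : set (set T)) = <<s dopen dist >>.

Definition bl x r := [set y | dist x y < r].

Lemma d_ge0 x y : 0 <= dist x y. Proof. by case: hd. Qed.
Lemma d_sym x y : dist x y = dist y x. Proof. by case: hd. Qed.
Lemma d_tri x y z : dist x z <= dist x y + dist y z. Proof. by case: hd. Qed.
Lemma d_eq0 x y : dist x y = 0 <-> x = y. Proof. by case: hd. Qed.
Lemma d_xx x : dist x x = 0. Proof. by apply/d_eq0. Qed.
Lemma d_gt0 x y : x <> y -> 0 < dist x y.
Proof. move=> nxy; rewrite lt_neqAle d_ge0 andbT; apply/eqP => h; apply: nxy; exact/d_eq0. Qed.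

Lemma dopen_bl x r : dopen dist (bl x r).
Proof.
move=> y /= hy; exists (r - dist x y); first by rewrite subr_gt0.
move=> z; rewrite /bl /= => hz; have := d_tri x y z; lra.
Qed.

Lemma open_meas U : dopen dist U -> measurable U.
Proof. by move=> hU; rewrite hmeas; exact: sub_gen_smallest. Qed.

Lemma bl_meas x r : measurable (bl x r).
Proof. exact/open_meas/dopen_bl. Qed.

Lemma bl_center x r : 0 < r -> bl x r x.
Proof. by rewrite /bl /= d_xx. Qed.

Definition rect (s : seq (set T)) : set (T * T) := \big[setU/set0]_(U <- s) (U `*` U).

Lemma rect_meas s : (forall U, U \in s -> measurable U) -> measurable (rect s).
Proof.
elim: s => [|U s IH] hs; first by rewrite /rect big_nil.
rewrite /rect big_cons; apply: measurableU.
  by apply: measurableX; apply: hs; rewrite in_cons eqxx.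
by apply: IH => V hV; apply: hs; rewrite in_cons hV orbT.
Qed.

Lemma rectP s p : rect s p <-> exists2 U, U \in s & U p.1 /\ U p.2.
Proof.
elim: s => [|U s IH]; first by rewrite /rect big_nil; split => // -[].
rewrite /rect big_cons; split.
  case=> [[h1 h2]|/IH [V hV hp]]; first by exists U; rewrite ?in_cons ?eqxx.
  by exists V => //; rewrite in_cons hV orbT.
move=> [V]; rewrite in_cons => /orP [/eqP ->|hV] hp; first by left.
by right; apply/IH; exists V.
Qed.


Lemma bigUP (s : seq (set T)) y :
  (\big[setU/set0]_(U <- s) U) y <-> exists2 U, U \in s & U y.
Proof.
elim: s => [|U s IH]; first by rewrite big_nil; split => // -[].
rewrite big_cons; split.
  case=> [h|/IH [V hV hp]]; first by exists U; rewrite ?in_cons ?eqxx.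
  by exists V => //; rewrite in_cons hV orbT.
move=> [V]; rewrite in_cons => /orP [/eqP ->|hV] hp; first by left.
by right; apply/IH; exists V.
Qed.

Hypothesis hc : dcompact dist.

Lemma cover_balls r : 0 < r -> exists s : seq (set T),
  (forall U, U \in s -> exists z, U = bl z r) /\ (forall x, exists2 U, U \in s & U x).
Proof.
move=> r0; have [||s [h1 h2]] := hc [set U | exists z, U = bl z r].
- by move=> U [z ->]; exact: dopen_bl.
- by move=> x; exists (bl x r); [exists x | exact: bl_center].
- by exists s.
Qed.

Lemma diag_meas : measurable (diagonal_set : set (T * T)).
Proof.
pose rn (n : nat) : R := n.+1%:R^-1.
have rn0 n : 0 < rn n by rewrite invr_gt0.
have hs n := cid (@cover_balls (rn n) (rn0 n)).
pose S n := proj1_sig (hs n).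
have -> : diagonal_set = \bigcap_n rect (S n).
  apply/seteqP; split.
  - move=> [x y]; rewrite /diagonal_set /= => hxy n _; rewrite -hxy; apply/rectP.
    have [_ h2] := proj2_sig (hs n); have [U hU Ux] := h2 x.
    by exists U.
  - move=> [x y] /= hxy; apply/d_eq0; apply/eqP; rewrite eq_le d_ge0 andbT.
    rewrite leNgt; apply/negP => dpos.
    pose n := Num.Def.trunc (2 / dist x y).
    have /rectP [U hU [/= Ux Uy]] := hxy n I.
    have [h1 _] := proj2_sig (hs n); have [z hz] := h1 U hU.
    rewrite hz /bl /= in Ux Uy.
    have := truncnS_gt (2 / dist x y); rewrite -/n => h.
    have k0 : (0 : R) < n.+1%:R by [].
    rewrite ltr_pdivrMr // in h.
    have := d_tri x z y; rewrite (d_sym x z) => ht.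
    have hk : n.+1%:R * rn n = 1 by rewrite /rn mulfV // gt_eqF.
    have : n.+1%:R * dist x y < n.+1%:R * (2 * rn n).
      rewrite ltr_pM2l //; lra.
    rewrite mulrCA hk; lra.
apply: bigcapT_measurable => n; apply: rect_meas => U hU.
have [h1 _] := proj2_sig (hs n); have [z ->] := h1 U hU; exact: bl_meas.
Qed.

Variable x0 : T.

Lemma dist_bounded : exists M, forall x y, dist x y <= M.
Proof.
have [||s [h1 h2]] := hc [set U | exists n : nat, U = bl x0 n%:R].
- by move=> U [n ->]; exact: dopen_bl.
- move=> x; exists (bl x0 (Num.Def.trunc (dist x0 x)).+1%:R).
    by exists (Num.Def.trunc (dist x0 x)).+1.
  by rewrite /bl /=; exact: truncnS_gt.
have [N hN] : exists N : nat, forall U, U \in s -> exists2 n : nat, (n <= N)%N & U = bl x0 n%:R.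
  elim: s h1 {h2} => [|U s IH] hs; first by exists 0%N.
  have [|N hN] := IH; first by move=> V hV; apply: hs; rewrite in_cons hV orbT.
  have [n ->] := hs U (mem_head _ _).
  exists (maxn n N) => V; rewrite in_cons => /orP [/eqP ->|hV].
    by exists n => //; rewrite leq_maxl.
  have [k hk ->] := hN V hV; exists k => //; exact: leq_trans hk (leq_maxr _ _).
have hb x : dist x0 x <= N%:R.
  have [U hU Ux] := h2 x; have [n hn hUe] := hN U hU.
  rewrite hUe /bl /= in Ux; apply: (le_trans (ltW Ux)); by rewrite ler_nat.
exists (2 * N%:R) => x y; have := d_tri x x0 y; rewrite (d_sym x x0).
have := hb x; have := hb y; lra.
Qed.

Lemma diam_ub x y : dist x y <= diam dist.
Proof.
have [M hM] := dist_bounded.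
apply: sup_upper_bound; last by exists x, y.
split; first by exists (dist x0 x0), x0, x0.
by exists M => _ [a [b ->]].
Qed.

Lemma diam_ge0 : 0 <= diam dist.
Proof. exact: le_trans (d_ge0 x0 x0) (diam_ub x0 x0). Qed.


Hypothesis hh : homogeneous dist.
Variable m : probability T R.
Hypothesis hinv : forall f, metric_isometry dist f ->
  forall A, measurable A -> m (f @^-1` A) = m A.

Lemma bl_eq x z r : m (bl x r) = m (bl z r).
Proof.
have [f hf fzx] := hh z x; rewrite -fzx.
rewrite -[LHS](@hinv f hf); last exact: bl_meas.
congr (m _); apply/seteqP; split => y; rewrite /bl /=; case: hf => _ ->//.
Qed.

Lemma null_big (s : seq (set T)) : (forall U, U \in s -> measurable U /\ m U = 0) ->
  m (\big[setU/set0]_(U <- s) U) = 0 /\ measurable (\big[setU/set0]_(U <- s) U).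
Proof.
elim: s => [|U s IH] hs; first by rewrite big_nil measure0.
have [|h1 h2] := IH; first by move=> V hV; apply: hs; rewrite in_cons hV orbT.
have [h3 h4] := hs U (mem_head _ _).
rewrite big_cons; split; last exact: measurableU.
apply/le_anti; rewrite measure_ge0 andbT.
have e1 : (m U + m (\big[setU/set0]_(V <- s) V) <= 0)%E by rewrite h4 h1 adde0.
exact: le_trans (measureU2 _ h3 h2) e1.
Qed.

Lemma bl_pos x r : 0 < r -> (0 < m (bl x r))%E.
Proof.
move=> r0; rewrite lt0e measure_ge0 andbT; apply/eqP => h0.
have [s [h1 h2]] := @cover_balls r r0.
have [|hz hmU] := @null_big s.
  move=> U hU; have [z ->] := h1 U hU; split; first exact: bl_meas.
  by rewrite (bl_eq z x).
have : (m setT <= m (\big[setU/set0]_(U <- s) U))%E.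
  apply: le_measure; [exact/mem_set/measurableT|exact/mem_set|]; move=> y _; apply/bigUP; exact: h2.
by rewrite probability_setT hz lee_fin ler10.
Qed.

Hypothesis hI : (\int[m \x m]_p (dist p.1 p.2)%:E
     = (1 - (m \x m) diagonal_set) * (diam dist)%:E)%E.

Lemma all_diam x y : x <> y -> dist x y = diam dist.
Proof.
move=> nxy; apply/eqP; rewrite eq_le diam_ub /= leNgt; apply/negP => hlt.
have Dpos := diam_ge0.
move: hlt Dpos; set D := diam dist; set d0 := dist x y => hlt Dpos.
have d0p : 0 < d0 := d_gt0 x y nxy.
have [r [r0 [r1 r2]]] : exists r : R, 0 < r /\ r <= d0 / 4 /\ r <= (D - d0) / 4.
  case: (leP (d0 / 4) ((D - d0) / 4)) => h.
    by exists (d0 / 4); split; [lra|split; lra].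
  by exists ((D - d0) / 4); split; [lra|split; lra].
pose eps := (D - d0) / 2.
pose Rr : set (T * T) := bl x r `*` bl y r.
pose Dg : set (T * T) := diagonal_set.
pose C := ~` (Dg `|` Rr).
have mRr : measurable Rr by apply: measurableX; exact: bl_meas.
have mDg : measurable Dg by exact: diag_meas.
have mC : measurable C by apply: measurableC; exact: measurableU.
have hR a b : Rr (a, b) -> dist a b <= D - eps /\ a <> b.
  rewrite /Rr /bl /= => -[ha hb]; split.
    have h1 := d_tri a x b; have h2 := d_tri x y b.
    rewrite (d_sym a x) in h1; rewrite -/d0 in h2; rewrite /eps; lra.
  move=> eab; subst b.
  have h1 := d_tri x a y; rewrite (d_sym a y) -/d0 in h1.
  have : d0 < d0 by lra.
  by rewrite ltxx.
pose g p := D * \1_C p + (D - eps) * \1_Rr p.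
have hle p : dist p.1 p.2 <= g p.
  case: p => a b; rewrite /g !indicE /=.
  case: (boolP ((a, b) \in Rr)) => hRr.
    have hnC : (a, b) \notin C.
      by apply/negP => /set_mem; rewrite /C /=; apply; right; exact/set_mem.
    rewrite (negbTE hnC) mulr0 add0r mulr1; exact: (hR a b (set_mem hRr)).1.
  case: (boolP ((a, b) \in C)) => hC; first by rewrite mulr1 mulr0 addr0; exact: diam_ub.
  have : Dg (a, b).
    move: hC => /negP hC; apply: contrapT => hD; apply: hC; apply/mem_set.
    rewrite /C /= => -[//|hr]; move/negP: hRr; apply; exact/mem_set.
  by rewrite /Dg /diagonal_set /= => ->; rewrite d_xx !mulr0 addr0.
have hint : (\int[m \x m]_p (g p)%:E = D%:E * (m \x m) C + (D - eps)%:E * (m \x m) Rr)%E.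
  rewrite /g; under eq_integral => p _ do rewrite EFinD.
  have Deps : 0 <= D - eps by rewrite /eps; lra.
  rewrite ge0_integralD //.
  - by rewrite !int_scal_indic.
  - by move=> p _; rewrite lee_fin mulr_ge0 // indicE.
  - apply: (measurable_realfun.measurable_EFinP setT (fun p => D * \1_C p)).2.
    by apply: measurable_realfun.measurable_funM => //; exact: measurable_realfun.measurable_indic.
  - by move=> p _; rewrite lee_fin mulr_ge0 // indicE.
  - apply: (measurable_realfun.measurable_EFinP setT (fun p => (D - eps) * \1_Rr p)).2.
    by apply: measurable_realfun.measurable_funM => //; exact: measurable_realfun.measurable_indic.
have hdiag : (1 - (m \x m) Dg = (m \x m) C + (m \x m) Rr)%E.
  rewrite -probability_setC //.
  have -> : ~` Dg = C `|` Rr.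
    apply/seteqP; split => p.
    - move=> nD; case: (pselect (Rr p)) => hr; first by right.
      by left; rewrite /C /= => -[].
    - case => [hCp|hr]; first by move=> hD; apply: hCp; left.
      case: p hr => a1 b1 hr hD; have [_ ] := hR a1 b1 hr; apply.
      exact: hD.
  rewrite measureU //; apply/seteqP; split => // p [hCp hr].
  by apply: hCp; right.
have hq0 : (0 < (m \x m) Rr)%E.
  rewrite product_measure1E; try exact: bl_meas.
  by apply: mule_gt0; exact: bl_pos.
pose c := fine ((m \x m) C); pose q := fine ((m \x m) Rr).
have hCc : ((m \x m) C = c%:E)%E by rewrite /c fineK //; rewrite ge0_fin_numE ?measure_ge0 //; exact: le_lt_trans (probability_le1 _ mC) (ltry _).
have hq : ((m \x m) Rr = q%:E)%E by rewrite /q fineK //; rewrite ge0_fin_numE ?measure_ge0 //; exact: le_lt_trans (probability_le1 _ mRr) (ltry _).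
rewrite hq lte_fin in hq0.
have := @my_le_int _ _ _ (m \x m)%E (fun p => (dist p.1 p.2)%:E) (fun p => (g p)%:E).
move=> /(_ _ _) H.
have {H} := H (fun p => d_ge0 _ _) (fun p => hle p).
change diagonal_set with Dg in hI.
rewrite hI hint hdiag hCc hq -EFinD -!EFinM -EFinD lee_fin => H.
have : 0 < eps by rewrite /eps; lra.
move=> he; have h2 : 0 < eps * q by apply: mulr_gt0.
rewrite -/D in H. have h3 : eps * q <= 0 by nra.
by have := lt_le_trans h2 h3; rewrite ltxx.
Qed.

End Aux.

Lemma sum_const_seq {R : realType} {K : choiceType} (s : seq K) (c : R) :
  \sum_(i <- s) c = (size s)%:R * c.
Proof.
elim: s => [|a s IH]; first by rewrite big_nil mul0r.
by rewrite big_cons IH /= -add1n natrD mulrDl mul1r.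
Qed.

Theorem proposition2p3 (R : realType) (dsp : measure_display)
  (T : measurableType dsp) (dist : T -> T -> R) (m : probability T R) :
  is_metric dist ->
  (* the sigma-algebra of T is the Borel sigma-algebra of the metric *)
  (measurable : set (set T)) = <<s dopen dist >> ->
  dcompact dist ->
  homogeneous dist ->
  (* m is invariant under all isometries *)
  (forall f, metric_isometry dist f -> forall A, measurable A -> m (f @^-1` A) = m A) ->
  (\int[m \x m]_p (dist p.1 p.2)%:E
     = (1 - (m \x m) diagonal_set) * (diam dist)%:E)%E ->
  [/\ finite_set [set: T],
      (forall x y : T, x <> y -> dist x y = diam dist) &
      (forall A : set T,
         m A = ((#|` fset_set A|)%:R / (#|` fset_set [set: T]|)%:R)%:E)].
Proof.
move=> hd hmeas hcomp hh hinv hI.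
have [x0 _] : [set: T] !=set0.
  apply/set0P; apply/negP => /eqP h0.
  have := probability_setT m; rewrite h0 measure0 => -[] /eqP.
  by rewrite eq_sym oner_eq0.
have hdD : forall x y : T, x <> y -> dist x y = diam dist.
  exact: (@all_diam _ _ _ dist hd hmeas hcomp x0 hh m hinv hI).
have hop U : dopen dist U.
  move=> x Ux; exists (if 0 < diam dist then diam dist else 1).
    by case: ifP.
  move=> y /=; case: (pselect (x = y)) => [<-//|nxy].
  have := d_gt0 dist hd x y nxy; rewrite (hdD _ _ nxy) => ->; by rewrite ltxx.
have hfin : finite_set [set: T].
  have [||s [h1 h2]] := hcomp [set U | exists z, U = [set z]].
  - by move=> U _; exact: hop.
  - by move=> x; exists [set x]; [exists x|].
  apply: (@sub_finite_set _ _ (\big[setU/set0]_(U <- s) U)).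
    by move=> x _; apply/bigUP; exact: h2.
  elim: s h1 {h2} => [|U s IH] hs; first by rewrite big_nil.
  rewrite big_cons finite_setU; split.
    by have [z ->] := hs U (mem_head _ _); exact: finite_set1.
  by apply: IH => V hV; apply: hs; rewrite in_cons hV orbT.
split => //.
have hmU (A : set T) : measurable A by apply: (open_meas dist hmeas); exact: hop.
have hsing a : m [set a] = m [set x0].
  have [f hf fa] := hh a x0.
  rewrite -fa -[RHS](hinv f hf) //; congr (m _); apply/seteqP; split => y /=.
    by move=> ->.
  by move=> /(bij_inj hf.1).
pose c := fine (m [set x0]).
have hsum B : finite_set B -> m B = ((#|` fset_set B|)%:R * c)%:E.
  move=> fB.
  have hB : \bigcup_(i in B) [set i] = B.
    apply/seteqP; split => y; last by move=> By; exists y.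
    by move=> [z Bz /= ->].
  rewrite -{1}hB.
  rewrite measure_fin_bigcup //; last first.
    by move=> i j _ _ [z [/= -> ->]].
  rewrite (eq_fsbigr (fun _ => c%:E)); last first.
    move=> i _; apply: etrans (hsing i) _; rewrite /c fineK //; exact: fin_num_measure.
  by rewrite fsumEFin // fsbig_finite // sum_const_seq.
have hT := hsum _ hfin; rewrite probability_setT in hT.
case: hT => hT.
set nT := (#|` fset_set [set: T]|)%:R in hT *.
have nT0 : nT != 0 by apply/eqP => h0; move: hT; rewrite h0 mul0r => /eqP; rewrite oner_eq0.
have hcv : c = nT^-1 by rewrite -[c](mulKf nT0) -hT mulr1.
move=> A; rewrite (hsum A (sub_finite_set (@subsetT _ A) hfin)) hcv.
by rewrite /nT.
Qed.
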